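(* Let $X$ be a Polish space and let $\delta_1,\delta_2,\delta_3$ be regular derivations on the closed subsets of $X$ such that $\delta_1(P)\subseteq\delta_2(P)\cup\delta_3(P)$ for every closed set $P$. Then for every countable ordinal $\alpha$ and every closed set $P$, $\delta_1^{\omega^\alpha}(P)\subseteq\delta_2^{\omega^\alpha}(P)\cup\delta_3^{\omega^\alpha}(P)$.
   Context: A derivation is a map $\delta$ from the closed subsets of $X$ to closed subsets with $\delta(P)\subseteq P$; iterates: $\delta^0(P)=P$, $\delta^{\alpha+1}(P)=\delta(\delta^\alpha(P))$, $\delta^\alpha(P)=\bigcap_{\alpha'<\alpha}\delta^{\alpha'}(P)$ for limit $\alpha$. A derivation is regular if (a) $P\subseteq Q$ implies $\delta(P)\subseteq\delta(Q)$, and (b) $\delta(P\cup Q)\subseteq\delta(P)\cup\delta(Q)$, for all closed $P,Q$. *)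

(* Defs.v *)
From Stdlib Require Import Reals Classical FunctionalExtensionality PropExtensionality.
Set Implicit Arguments.
Open Scope R_scope.

Record topology (X : Type) := {
  is_open : (X -> Prop) -> Prop;
  open_full : is_open (fun _ => True);
  open_inter : forall U V, is_open U -> is_open V -> is_open (fun x => U x /\ V x);
  open_union : forall (I : Type) (F : I -> X -> Prop),
      (forall i, is_open (F i)) -> is_open (fun x => exists i, F i x)
}.

Definition is_closed (X : Type) (T : topology X) (P : X -> Prop) : Prop :=
  is_open T (fun x => ~ P x).

Definition is_metric (X : Type) (d : X -> X -> R) : Prop :=
  (forall x y, 0 <= d x y) /\ (forall x y, d x y = 0 <-> x = y) /\
  (forall x y, d x y = d y x) /\ (forall x y z, d x z <= d x y + d y z).

Definition metric_open (X : Type) (d : X -> X -> R) (U : X -> Prop) : Prop :=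
  forall x, U x -> exists eps, 0 < eps /\ forall y, d x y < eps -> U y.

Definition metric_cauchy (X : Type) (d : X -> X -> R) (u : nat -> X) : Prop :=
  forall eps, 0 < eps -> exists N, forall m n, (N <= m)%nat -> (N <= n)%nat -> d (u m) (u n) < eps.

Definition metric_converges (X : Type) (d : X -> X -> R) (u : nat -> X) (l : X) : Prop :=
  forall eps, 0 < eps -> exists N, forall n, (N <= n)%nat -> d (u n) l < eps.

Definition metric_complete (X : Type) (d : X -> X -> R) : Prop :=
  forall u, metric_cauchy d u -> exists l, metric_converges d u l.

(* a countable dense subset, enumerated by a partial sequence (allows X empty) *)
Definition metric_separable (X : Type) (d : X -> X -> R) : Prop :=
  exists s : nat -> option X,
    forall x eps, 0 < eps -> exists n y, s n = Some y /\ d x y < eps.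

Definition polish (X : Type) (T : topology X) : Prop :=
  exists d : X -> X -> R,
    is_metric d /\ metric_complete d /\ metric_separable d /\
    (forall U, is_open T U <-> metric_open d U).

Definition cset (X : Type) (T : topology X) := { P : X -> Prop | is_closed T P }.

Definition cs_mem (X : Type) (T : topology X) (P : cset T) (x : X) : Prop :=
  proj1_sig P x.

Definition cs_subset (X : Type) (T : topology X) (P Q : cset T) : Prop :=
  forall x, cs_mem P x -> cs_mem Q x.

Lemma closed_union (X : Type) (T : topology X) (P Q : X -> Prop) :
  is_closed T P -> is_closed T Q -> is_closed T (fun x => P x \/ Q x).
Proof.
  unfold is_closed; intros HP HQ.
  replace (fun x => ~ (P x \/ Q x)) with (fun x => ~ P x /\ ~ Q x).
  - now apply open_inter.
  - apply functional_extensionality; intro x; apply propositional_extensionality; tauto.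
Qed.

Lemma closed_bigcap (X : Type) (T : topology X) (F : nat -> X -> Prop) :
  (forall n, is_closed T (F n)) -> is_closed T (fun x => forall n, F n x).
Proof.
  unfold is_closed; intros HF.
  replace (fun x => ~ (forall n, F n x)) with (fun x => exists n, ~ F n x).
  - now apply open_union.
  - apply functional_extensionality; intro x; apply propositional_extensionality.
    split.
    + intros [n Hn] H; exact (Hn (H n)).
    + intro H; apply not_all_ex_not; exact H.
Qed.

Definition cs_union (X : Type) (T : topology X) (P Q : cset T) : cset T :=
  exist _ (fun x => cs_mem P x \/ cs_mem Q x)
        (@closed_union X T _ _ (proj2_sig P) (proj2_sig Q)).

Definition cs_bigcap (X : Type) (T : topology X) (F : nat -> cset T) : cset T :=
  exist _ (fun x => forall n, cs_mem (F n) x)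
        (@closed_bigcap X T _ (fun n => proj2_sig (F n))).

Definition is_derivation (X : Type) (T : topology X)
  (delta : cset T -> cset T) : Prop :=
  forall P, cs_subset (delta P) P.

Definition is_regular_derivation (X : Type) (T : topology X)
  (delta : cset T -> cset T) : Prop :=
  is_derivation delta /\
  (forall P Q, cs_subset P Q -> cs_subset (delta P) (delta Q)) /\
  (forall P Q x, cs_mem (delta (cs_union P Q)) x -> cs_mem (delta P) x \/ cs_mem (delta Q) x).

(* ---------- Countable ordinals as Brouwer trees ----------
   OL f denotes the supremum of the ordinals denoted by the f n. *)
Inductive ord : Type :=
| OZ : ord
| OS : ord -> ord
| OL : (nat -> ord) -> ord.

Fixpoint ord_of_nat (n : nat) : ord :=
  match n with O => OZ | S k => OS (ord_of_nat k) end.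

Definition omega : ord := OL ord_of_nat.

Fixpoint oadd (a b : ord) : ord :=
  match b with
  | OZ => a
  | OS c => OS (oadd a c)
  | OL f => OL (fun n => oadd a (f n))
  end.

Fixpoint omul (a b : ord) : ord :=
  match b with
  | OZ => OZ
  | OS c => oadd (omul a c) a
  | OL f => OL (fun n => omul a (f n))
  end.

Fixpoint opow_omega (a : ord) : ord :=
  match a with
  | OZ => OS OZ
  | OS c => omul (opow_omega c) omega
  | OL f => OL (fun n => opow_omega (f n))
  end.

(* transfinite iterates delta^a(P); at a limit node the intersection over the
   sequence (equal to the intersection over all smaller ordinals, since the
   iterates decrease for a derivation) *)
Fixpoint iter (X : Type) (T : topology X) (delta : cset T -> cset T)
  (a : ord) (P : cset T) : cset T :=
  match a with
  | OZ => P
  | OS b => delta (iter delta b P)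
  | OL f => cs_bigcap (fun n => iter delta (f n) P)
  end.

(* Main.v *)
Require Import Defs.
From Stdlib Require Import Reals Classical FunctionalExtensionality Lia.
Set Implicit Arguments.

Fixpoint ole (a b : ord) {struct a} : Prop :=
  match a with
  | OZ => True
  | OS a' => (fix ltb (b : ord) : Prop :=
                match b with
                | OZ => False
                | OS b' => ole a' b'
                | OL g => exists m, ltb (g m)
                end) b
  | OL f => forall n, ole (f n) b
  end.

Lemma ole_total (a b : ord) : ole a b \/ ole (OS b) a.
Proof.
  revert b; induction a as [|a IH|f IH]; intros b.
  - left; exact I.
  - induction b as [|b IHb|g IHg].
    + right; simpl; exact I.
    + simpl. destruct (IH b) as [h|h]; [left; exact h|right; exact h].
    + destruct (classic (forall m, ole (g m) a)) as [Hall|Hn].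
      * right. exact Hall.
      * left. apply not_all_ex_not in Hn. destruct Hn as [m Hm].
        exists m. destruct (IHg m) as [h|h]; [exact h|contradiction].
  - destruct (classic (forall n, ole (f n) b)) as [Hall|Hn].
    + left; exact Hall.
    + right. apply not_all_ex_not in Hn. destruct Hn as [n Hn].
      exists n. destruct (IH n b) as [h|h]; [contradiction|exact h].
Qed.

Lemma defl (X : Type) (T : topology X) (d : cset T -> cset T)
  (Hd : is_regular_derivation d) :
  forall a P x, cs_mem (iter d a P) x -> cs_mem P x.
Proof.
  induction a as [|a IH|f IH]; simpl; intros P x H.
  - exact H.
  - apply IH. apply (proj1 Hd). exact H.
  - exact (IH O P x (H O)).
Qed.

Lemma mono_iter (X : Type) (T : topology X) (d : cset T -> cset T)
  (Hd : is_regular_derivation d) :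
  forall a P Q, (forall x, cs_mem P x -> cs_mem Q x) ->
  forall x, cs_mem (iter d a P) x -> cs_mem (iter d a Q) x.
Proof.
  induction a as [|a IH|f IH]; simpl; intros P Q HPQ x H.
  - apply HPQ; exact H.
  - apply (proj1 (proj2 Hd) (iter d a P) (iter d a Q)); [|exact H].
    intros y; apply IH; exact HPQ.
  - intro n. exact (IH n P Q HPQ x (H n)).
Qed.

Lemma ole_iter (X : Type) (T : topology X) (d : cset T -> cset T)
  (Hd : is_regular_derivation d) :
  forall a b, ole a b -> forall P x, cs_mem (iter d b P) x -> cs_mem (iter d a P) x.
Proof.
  induction a as [|a IH|f IH].
  - intros b _ P x H. exact (defl Hd b P x H).
  - intros b; induction b as [|b IHb|g IHg]; intros H P x Hx.
    + destruct H.
    + simpl in H, Hx |- *.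
      apply (proj1 (proj2 Hd) (iter d b P) (iter d a P)); [|exact Hx].
      intros y; apply IH; exact H.
    + destruct H as [m Hm]. exact (IHg m Hm P x (Hx m)).
  - intros b H P x Hx. intro n. exact (IH n b (H n) P x Hx).
Qed.

Lemma comp (X : Type) (T : topology X) (a b : ord) :
  (forall d : cset T -> cset T, is_regular_derivation d ->
     forall P x, cs_mem (iter d b P) x -> cs_mem (iter d a P) x) \/
  (forall d : cset T -> cset T, is_regular_derivation d ->
     forall P x, cs_mem (iter d a P) x -> cs_mem (iter d b P) x).
Proof.
  destruct (ole_total a b) as [h|h].
  - left. intros d Hd. exact (ole_iter Hd a b h).
  - right. intros d Hd P x Hx.
    pose proof (ole_iter Hd (OS b) a h P x Hx) as H'.
    simpl in H'. apply (proj1 Hd). exact H'.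
Qed.

Lemma pick (X : Type) (T : topology X) (d d' : cset T -> cset T)
  (Hd : is_regular_derivation d) (Hd' : is_regular_derivation d')
  (g : nat -> ord) (P P' : cset T) (x : X) :
  (forall n, cs_mem (iter d (g n) P) x \/ cs_mem (iter d' (g n) P') x) ->
  (forall n, cs_mem (iter d (g n) P) x) \/ (forall n, cs_mem (iter d' (g n) P') x).
Proof.
  intro H.
  destruct (classic (forall n, cs_mem (iter d (g n) P) x)) as [Hall|Hn].
  - left; exact Hall.
  - right. apply not_all_ex_not in Hn. destruct Hn as [n0 Hn0].
    intro m. destruct (comp T (g n0) (g m)) as [C|C].
    + destruct (H m) as [h|h].
      * exfalso. apply Hn0. exact (C d Hd P x h).
      * exact h.
    + destruct (H n0) as [h|h].
      * contradiction.
      * exact (C d' Hd' P' x h).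
Qed.

Lemma union_iter (X : Type) (T : topology X) (d : cset T -> cset T)
  (Hd : is_regular_derivation d) :
  forall a A B x, cs_mem (iter d a (cs_union A B)) x ->
    cs_mem (iter d a A) x \/ cs_mem (iter d a B) x.
Proof.
  induction a as [|a IH|f IH]; intros A B x H.
  - exact H.
  - simpl in H |- *.
    apply (proj2 (proj2 Hd)).
    apply (proj1 (proj2 Hd) (iter d a (cs_union A B))); [|exact H].
    intros y Hy. exact (IH A B y Hy).
  - apply (pick Hd Hd f A B x). intro n. apply IH. exact (H n).
Qed.

Lemma iter_add (X : Type) (T : topology X) (d : cset T -> cset T) (a : ord) :
  forall b P, iter d (oadd a b) P = iter d b (iter d a P).
Proof.
  induction b as [|b IH|f IH]; intros P; simpl.
  - reflexivity.
  - rewrite IH; reflexivity.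
  - f_equal. apply functional_extensionality. intro n. apply IH.
Qed.

Lemma iter_mulS (X : Type) (T : topology X) (d : cset T -> cset T) (b : ord) (n : nat) P :
  iter d (omul b (ord_of_nat (S n))) P = iter d b (iter d (omul b (ord_of_nat n)) P).
Proof.
  change (omul b (ord_of_nat (S n))) with (oadd (omul b (ord_of_nat n)) b).
  apply iter_add.
Qed.

Definition cs_inter (X : Type) (T : topology X) (A B : cset T) : cset T :=
  cs_bigcap (fun n => match n with O => A | S _ => B end).

Lemma mem_inter (X : Type) (T : topology X) (A B : cset T) x :
  cs_mem (cs_inter A B) x -> cs_mem A x /\ cs_mem B x.
Proof. intro H. split; [exact (H O) | exact (H 1%nat)]. Qed.

Lemma inter_mem (X : Type) (T : topology X) (A B : cset T) x :
  cs_mem A x -> cs_mem B x -> cs_mem (cs_inter A B) x.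
Proof. intros HA HB [|n]; assumption. Qed.

Unset Implicit Arguments.
Theorem proposition4p2 (X : Type) (T : topology X) (HX : polish T)
  (d1 d2 d3 : cset T -> cset T)
  (H1 : is_regular_derivation d1) (H2 : is_regular_derivation d2)
  (H3 : is_regular_derivation d3)
  (H123 : forall (P : cset T) (x : X),
      cs_mem (d1 P) x -> cs_mem (d2 P) x \/ cs_mem (d3 P) x) :
  forall (a : ord) (P : cset T) (x : X),
    cs_mem (iter d1 (opow_omega a) P) x ->
    cs_mem (iter d2 (opow_omega a) P) x \/ cs_mem (iter d3 (opow_omega a) P) x.
Proof.
  intro a; induction a as [|c IH|f IH]; intros P x Hx.
  - simpl in Hx |- *. apply H123; exact Hx.
  - set (b := opow_omega c) in *.
    assert (G : forall n j k, (j + k = n)%nat -> forall P0 x0,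
      cs_mem (iter d1 (omul b (ord_of_nat n)) P0) x0 ->
      cs_mem (iter d2 (omul b (ord_of_nat j)) P0) x0 \/
      cs_mem (iter d3 (omul b (ord_of_nat k)) P0) x0).
    { induction n as [|n IHn]; intros j k Hjk P0 x0 H0.
      - assert (j = 0%nat) by lia; subst j. left. exact H0.
      - destruct j as [|j'].
        { left. exact (defl H1 _ P0 x0 H0). }
        destruct k as [|k'].
        { right. exact (defl H1 _ P0 x0 H0). }
        rewrite iter_mulS in H0.
        set (A := iter d2 (omul b (ord_of_nat (S j'))) P0).
        set (A' := iter d2 (omul b (ord_of_nat j')) P0).
        set (Bk := iter d3 (omul b (ord_of_nat (S k'))) P0).
        set (B' := iter d3 (omul b (ord_of_nat k')) P0).
        set (Q := cs_union A (cs_union Bk (cs_inter A' B'))).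
        assert (HQ : forall y, cs_mem (iter d1 (omul b (ord_of_nat n)) P0) y -> cs_mem Q y).
        { intros y Hy.
          destruct (IHn j' (S k') ltac:(lia) P0 y Hy) as [h1|h1];
          destruct (IHn (S j') k' ltac:(lia) P0 y Hy) as [h2|h2].
          - left; exact h2.
          - right; right. apply inter_mem; assumption.
          - left; exact h2.
          - right; left; exact h1. }
        pose proof (mono_iter H1 b _ Q HQ x0 H0) as HQ0.
        destruct (union_iter H1 b _ _ x0 HQ0) as [h|h].
        + left. exact (defl H1 b A x0 h).
        + destruct (union_iter H1 b _ _ x0 h) as [h'|h'].
          * right. exact (defl H1 b Bk x0 h').
          * destruct (IH _ x0 h') as [e|e].
            -- left. unfold A. rewrite iter_mulS.
               apply (mono_iter H2 b (cs_inter A' B') A'); [|exact e].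
               intros y Hy; exact (proj1 (mem_inter Hy)).
            -- right. unfold Bk. rewrite iter_mulS.
               apply (mono_iter H3 b (cs_inter A' B') B'); [|exact e].
               intros y Hy; exact (proj2 (mem_inter Hy)). }
    change (opow_omega (OS c)) with (OL (fun n => omul b (ord_of_nat n))) in *.
    apply (pick H2 H3 (fun n => omul b (ord_of_nat n)) P P x).
    intro n. apply (G (n + n)%nat n n eq_refl). exact (Hx (n + n)%nat).
  - change (opow_omega (OL f)) with (OL (fun n => opow_omega (f n))) in *.
    apply (pick H2 H3 (fun n => opow_omega (f n)) P P x).
    intro n. apply IH. exact (Hx n).
Qed.
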